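(* For every claw-free graph $G$, $\chi(G^2)\le 2\omega(G)^2-2\omega(G)+1$.
   Context: Claw-free means no induced $K_{1,3}$. $G^2$ is the graph on $V(G)$ where distinct vertices are adjacent iff at distance at most $2$ in $G$. $\chi$ is chromatic number, $\omega$ clique number. *)

(* Defs.v *)
(* A finite simple graph on a finType T is a symmetric,
   irreflexive relation e : rel T. *)
From mathcomp Require Import all_boot.
Set Implicit Arguments. Unset Strict Implicit. Unset Printing Implicit Defensive.

Section Graphs.
Variable T : finType.

Definition claw_free (e : rel T) : Prop :=
  forall c a b d : T, e c a -> e c b -> e c d ->
    a != b -> a != d -> b != d ->
    ~~ e a b -> ~~ e a d -> ~~ e b d -> False.

Definition square (e : rel T) : rel T :=
  fun x y => (x != y) && (e x y || [exists z, e x z && e z y]).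

Definition clique (e : rel T) (K : {set T}) : bool :=
  [forall x in K, forall y in K, (x != y) ==> e x y].

Definition omega (e : rel T) : nat := \max_(K : {set T} | clique e K) #|K|.

Definition colorable (e : rel T) (k : nat) : bool :=
  [exists f : {ffun T -> 'I_k},
     [forall x, forall y, ((x != y) && e x y) ==> (f x != f y)]].

Lemma colorable_card (e : rel T) : exists k, colorable e k.
Proof.
exists #|T|; apply/existsP; exists [ffun x => enum_rank x].
apply/forallP=> x; apply/forallP=> y; apply/implyP=> /andP [nxy _].
rewrite !ffunE; apply: contra nxy => /eqP /enum_rank_inj ->; exact: eqxx.
Qed.

Definition chi (e : rel T) : nat := ex_minn (colorable_card e).
End Graphs.

(* Main.v *)
Require Import Defs.
From mathcomp Require Import all_boot zify.
Set Implicit Arguments. Unset Strict Implicit. Unset Printing Implicit Defensive.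

Section Greedy.
Variable T : finType.
Variable r : rel T.
Hypothesis r_sym : symmetric r.
Variable D : nat.
Hypothesis deg : forall x, #|[set y | r x y]| <= D.

Lemma greedy_set n : forall S : {set T}, #|S| = n ->
  exists f : {ffun T -> 'I_D.+1},
    forall x y, x \in S -> y \in S -> x != y -> r x y -> f x != f y.
Proof.
elim: n => [|n IH] S hS.
  exists [ffun=> ord0] => x y; move: hS => /eqP; rewrite cards_eq0 => /eqP ->.
  by rewrite inE.
have: 0 < #|S| by rewrite hS.
case/card_gt0P => x xS.
have hS' : #|S :\ x| = n by move: hS; rewrite (cardsD1 x S) xS; case.
have [f hf] := IH _ hS'.
set N := [set y | r x y].
have hlt : #|f @: N| < #|'I_D.+1|.
  rewrite card_ord ltnS; apply: leq_trans (leq_imset_card _ _) (deg x).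
have : 0 < #|~: (f @: N)|.
  have := cardsC (f @: N). rewrite card_ord in hlt *. lia.
case/card_gt0P => c; rewrite inE => hc.
exists [ffun y => if y == x then c else f y] => y z yS zS nyz ryz.
rewrite !ffunE.
case: (eqVneq y x) => [eyx|nyx]; case: (eqVneq z x) => [ezx|nzx].
- by rewrite eyx ezx eqxx in nyz.
- apply: contra hc => /eqP ->; apply/imsetP; exists z => //.
  by rewrite inE -eyx.
- apply: contra hc => /eqP <-; apply/imsetP; exists y => //.
  by rewrite inE -ezx r_sym.
- by apply: hf => //; rewrite in_setD1 ?nyx ?nzx.
Qed.

Lemma greedy_col : colorable r D.+1.
Proof.
have [f hf] := greedy_set (erefl #|[set: T]|).
apply/existsP; exists f; apply/forallP => x; apply/forallP => y.
apply/implyP => /andP [nxy rxy]; exact: hf.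
Qed.
End Greedy.
Lemma chi_le (T : finType) (r : rel T) n : colorable r n -> chi r <= n.
Proof. rewrite /chi; case: ex_minnP => m _ h; exact: h. Qed.
Section Claw.
Variable T : finType.
Variable e : rel T.
Hypothesis e_sym : symmetric e.
Hypothesis e_irr : irreflexive e.
Hypothesis cf : claw_free e.

Lemma sum_card (P Q : pred T) :
  \sum_(y | P y) (Q y : nat) = #|[set y | P y && Q y]|.
Proof.
rewrite -sum1dep_card big_mkcondr /=; apply: eq_bigr => y _; by case: (Q y).
Qed.

Lemma cliqueI (K : {set T}) :
  (forall x y, x \in K -> y \in K -> x != y -> e x y) -> clique e K.
Proof.
move=> h; apply/forallP => x; apply/implyP => xK; apply/forallP => y.
apply/implyP => yK; apply/implyP; exact: h.
Qed.

Lemma cliqueE (K : {set T}) x y : clique e K -> x \in K -> y \in K -> x != y -> e x y.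
Proof.
move=> /forallP /(_ x) /implyP h xK; move: (h xK) => /forallP /(_ y) /implyP h2 yK.
exact: (implyP (h2 yK)).
Qed.

Lemma clique_le (K : {set T}) : clique e K -> #|K| <= omega e.
Proof. move=> h; rewrite /omega; exact: (leq_bigmax_cond (P := fun K : {set T} => clique e K) (F := fun K : {set T} => #|K|) _ h). Qed.

Lemma clique_add (K : {set T}) p :
  clique e K -> (forall x, x \in K -> e p x) -> clique e (p |: K).
Proof.
move=> hK hp; apply: cliqueI => x y; rewrite !in_setU1.
case/predU1P => [->|xK]; case/predU1P => [->|yK] //; first by rewrite eqxx.
- by move=> _; apply: hp.
- by move=> _; rewrite e_sym; apply: hp.
- exact: cliqueE hK xK yK.
Qed.

Lemma clique_add_card (K : {set T}) p :
  clique e K -> (forall x, x \in K -> e p x) -> #|K| < omega e.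
Proof.
move=> hK hp; have pK : p \notin K.
  by apply/negP => /hp; rewrite e_irr.
have := clique_le (clique_add hK hp); rewrite cardsU1 pK //.
Qed.

Lemma ramsey k : forall S : {set T},
  (forall a b c, a \in S -> b \in S -> c \in S -> a != b -> a != c -> b != c ->
      [|| e a b, e a c | e b c]) ->
  (forall K : {set T}, K \subset S -> clique e K -> #|K| <= k) ->
  2 * #|S| <= k * (k + 3).
Proof.
elim: k => [|k IH] S htr hcl.
  case: (set_0Vmem S) => [->|[a aS]]; first by rewrite cards0.
  have c1 : clique e [set a].
    by apply: cliqueI => x y; rewrite !inE => /eqP -> /eqP ->; rewrite eqxx.
  by have := hcl [set a]; rewrite sub1set aS cards1 => /(_ isT c1).
case: (set_0Vmem S) => [->|[a aS]]; first by rewrite cards0.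
set P := [set y in S | e a y].
set Q := [set y in S | (y != a) && ~~ e a y].
have sub : S \subset a |: (P :|: Q).
  apply/subsetP => y yS; rewrite !inE yS /=.
  by case: (y == a); case: (e a y).
have cP : 2 * #|P| <= k * (k + 3).
  apply: IH.
    move=> x y z; rewrite !inE => /andP[xS _] /andP[yS _] /andP[zS _]; exact: htr.
  move=> K KP cK.
  have : #|a |: K| <= k.+1.
    apply: hcl; last first.
      apply: clique_add => // x xK; move/subsetP: KP => /(_ x xK); rewrite inE.
      by case/andP.
    apply/subsetP => x; rewrite in_setU1 => /predU1P [->//|xK].
    by move/subsetP: KP => /(_ x xK); rewrite inE; case/andP.
  have aK : a \notin K.
    apply/negP => /(subsetP KP); rewrite inE e_irr; by case/andP.
  by rewrite cardsU1 aK.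
have cQ : #|Q| <= k.+1.
  apply: hcl; first by apply/subsetP => x; rewrite inE; case/andP.
  apply: cliqueI => x y; rewrite !inE => /and3P[xS xa exa] /and3P[yS ya eya] xy.
  have := htr a x y aS xS yS; rewrite eq_sym xa eq_sym ya (negbTE exa) (negbTE eya).
  by move=> /(_ isT isT xy).
have := subset_leq_card sub.
have := cardsU1 a (P :|: Q); have := cardsU P Q.
have := leq_b1 (a \notin P :|: Q).
lia.
Qed.


Lemma arith_fin n b k : 2 * n <= k * (k + 3) -> b <= n * k -> b * (n + 1 - 2 * k) <= n * k ->
  n + b <= 2 * (k + 1) * k.
Proof.
move=> h1 h2 h3.
case: (leqP n (2 * k)) => hn.
  nia.
have [t ht] : exists t, n = 2 * k + 1 + t by exists (n - (2*k+1)); lia.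
subst n.
have e1 : 2 * k + 1 + t + 1 - 2 * k = t + 2 by lia.
rewrite e1 in h3.
nia.
Qed.

Lemma ew_lem x : 0 < x -> 2 * x ^ 2 - 2 * x = 2 * (x.-1 + 1) * x.-1.
Proof. case: x => // x _ /=; nia. Qed.

Lemma claw3 c a b d : e c a -> e c b -> e c d -> a != b -> a != d -> b != d ->
  [|| e a b, e a d | e b d].
Proof.
move=> h1 h2 h3 h4 h5 h6.
case eab: (e a b); case ead: (e a d); case ebd: (e b d) => //=.
exfalso; apply: (cf h1 h2 h3 h4 h5 h6); by rewrite ?eab ?ead ?ebd.
Qed.

Lemma local_bound v : #|[set y | square e v y]| <= 2 * omega e ^ 2 - 2 * omega e.
Proof.
set w := omega e.
have w1 : 0 < w.
  have c1 : clique e [set v].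
    by apply: cliqueI => x y; rewrite !inE => /eqP -> /eqP ->; rewrite eqxx.
  by have := clique_le c1; rewrite cards1.
set A := [set y | e v y].
set B := [set y | (y != v) && ~~ e v y && [exists z, e v z && e z y]].
have sq : [set y | square e v y] \subset A :|: B.
  apply/subsetP => y; rewrite !inE /square => /andP [vy].
  case/orP => [->//|ex]; rewrite orbC eq_sym vy ex /= andbT.
  by case: (e v y).
have ramA : 2 * #|A| <= w.-1 * (w.-1 + 3).
  apply: ramsey.
    move=> a b c; rewrite !inE; exact: claw3.
  move=> K KA cK; have := clique_add_card cK (p := v).
  have h : forall x, x \in K -> e v x.
    by move=> x /(subsetP KA); rewrite inE.
  move=> /(_ h); rewrite -/w; lia.
have hC : forall u, u \in A -> #|[set y | (y \in B) && e u y]| <= w.-1.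
  move=> u; rewrite inE => vu.
  suff : #|[set y | (y \in B) && e u y]| < w by lia.
  apply: (clique_add_card (p := u)); last by move=> x; rewrite inE; case/andP.
  apply: cliqueI => y1 y2; rewrite !inE => /andP [/andP [/andP [y1v vy1] _] uy1].
  move=> /andP [/andP [/andP [y2v vy2] _] uy2] y12.
  have uv : e u v by rewrite e_sym.
  have := claw3 uv uy1 uy2.
  rewrite eq_sym y1v eq_sym y2v (negbTE vy1) (negbTE vy2) /=.
  by move=> /(_ isT isT y12).
have hD : forall y, y \in B -> 0 < #|[set u | (u \in A) && e u y]| /\
    #|A| + 1 <= #|[set u | (u \in A) && e u y]| + 2 * w.-1.
  move=> y; rewrite inE => /andP [/andP [yv vy] /existsP [u /andP [vu uy]]].
  set D := [set u | (u \in A) && e u y].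
  have uD : u \in D by rewrite !inE vu uy.
  split; first by apply/card_gt0P; exists u.
  set Q1 := [set a in A | e u a && ~~ e a y].
  set Q2 := [set a in A | (a != u) && ~~ e u a].
  have sub : A \subset D :|: (Q1 :|: Q2).
    apply/subsetP => a; rewrite !inE => va; rewrite va /=.
    case: (eqVneq a u) => [->|au]; first by rewrite uy.
    by case: (e a y); case: (e u a).
  have hQ2 : #|Q2| < w.
    apply: (clique_add_card (p := v)); last by move=> x; rewrite !inE; case/andP.
    apply: cliqueI => a b; rewrite !inE => /andP [va /andP [au nua]].
    move=> /andP [vb /andP [bu nub]] ab.
    have := claw3 vu va vb; rewrite eq_sym au eq_sym bu (negbTE nua) (negbTE nub).
    by move=> /(_ isT isT ab).
  have cQ1 : clique e Q1.
    apply: cliqueI => a b; rewrite !inE => /andP [va /andP [ua nay]].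
    move=> /andP [vb /andP [ub nby]] ab.
    have ya : y != a by apply: contraNneq vy => ->.
    have yb : y != b by apply: contraNneq vy => ->.
    have := claw3 uy ua ub; rewrite ya yb e_sym (negbTE nay) e_sym (negbTE nby).
    by move=> /(_ isT isT ab).
  have uQ1 : u \notin Q1 by rewrite !inE e_irr andbF.
  have hQ1 : #|u |: Q1| < w.
    apply: (clique_add_card (p := v)).
      apply: clique_add => // x; rewrite inE; by case/andP => _ /andP [].
    move=> x; rewrite !inE => /predU1P [->//|]; by case/andP.
  move: hQ1; rewrite cardsU1 uQ1 => hQ1.
  have := subset_leq_card sub.
  have := cardsU D (Q1 :|: Q2); have := cardsU Q1 Q2.
  lia.
set E := \sum_(u in A) \sum_(y in B) (e u y : nat).
have E1 : E <= #|A| * w.-1.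
  rewrite -sum_nat_const; apply: leq_sum => u uA; rewrite sum_card; exact: hC.
have E2 : E = \sum_(y in B) \sum_(u in A) (e u y : nat) by rewrite /E exchange_big.
have E3 : #|B| * 1 <= E.
  rewrite E2 -sum_nat_const; apply: leq_sum => y yB; rewrite sum_card.
  by case: (hD y yB).
have E4 : #|B| * (#|A| + 1 - 2 * w.-1) <= E.
  rewrite E2 -sum_nat_const; apply: leq_sum => y yB; rewrite sum_card.
  case: (hD y yB) => _; lia.
have fin := arith_fin ramA (leq_trans (leq_trans _ E3) E1) (leq_trans E4 E1).
have := subset_leq_card sq; have := cardsU A B.
have ew : 2 * w ^ 2 - 2 * w = 2 * (w.-1 + 1) * w.-1.
  exact: ew_lem.
rewrite ew. move: fin; rewrite muln1 => fin. lia.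
Qed.

End Claw.

Lemma square_sym (T : finType) (e : rel T) : symmetric e -> symmetric (square e).
Proof.
move=> es x y; rewrite /square eq_sym es; congr (_ && (_ || _)).
by apply/existsP/existsP => [] [z /andP [a b]]; exists z; rewrite es b es a.
Qed.

Theorem mainTheorem7 (T : finType) (e : rel T)
  (e_sym : symmetric e) (e_irr : irreflexive e) (G_claw_free : claw_free e) :
  chi (square e) <= 2 * omega e ^ 2 - 2 * omega e + 1.
Proof.
have := chi_le (greedy_col (square_sym e_sym) (local_bound e_sym e_irr G_claw_free)).
by rewrite addn1.
Qed.
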